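(* Fix a positive integer $k$. Then there are only finitely many allowable critical data sets (for all types $(n,d,k)$ with $n>k$, $d\in\mathbb Z$) for which $C_{12}\le 0$ or $C_{21}\le 0$.
   Context: Let $0<k<n$ and $d$ be integers. Write $d=na-t$ with integers $a,t$, $0\le t<n$, and $ka=l(n-k)+t+m$ with integers $l,m$, $0\le m<n-k$. A critical data set for type $(n,d,k)$ is a tuple $A_c=(\alpha_c,n_1,d_1,k_1,n_2,d_2,k_2)$ with integers $n_i\ge1$, $k_i\ge0$, $d_i$, such that $n_1+n_2=n$, $d_1+d_2=d$, $k_1+k_2=k$, $\frac{d_2}{n_2}>\frac{d_1}{n_1}$, $\frac{k_1}{n_1}>\frac{k_2}{n_2}$, and $\alpha_c=\frac{d_2n_1-d_1n_2}{n_2k_1-n_1k_2}$. It is allowable if moreover $\frac tk<\alpha_c<\frac{ln+t}{k}$, $d\ge\frac1k(n^2-1)-(n-k)$, $d_1\ge\frac1{k_1}(n_1^2-1)-(n_1-k_1)$, and either ($k_2=0$ and $n_2=1$) or ($k_2\ge1$ and $d_2\ge\frac1{k_2}(n_2^2-1)-(n_2-k_2)$). For a critical data set define $C_{12}=-n_1n_2-d_2n_1+d_1n_2+k_1(d_2+n_2-k_2)$ and $C_{21}=-n_1n_2+d_2n_1-d_1n_2+k_2(d_1+n_1-k_1)$. *)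

(* Defs.v *)
From mathcomp Require Import all_boot all_order all_algebra.
Set Implicit Arguments. Unset Strict Implicit. Unset Printing Implicit Defensive.
Import Order.TTheory GRing.Theory Num.Theory.
Local Open Scope ring_scope.

Definition q (z : int) : rat := z%:~R.

Definition alpha_c (n1 d1 k1 n2 d2 k2 : int) : rat :=
  q (d2 * n1 - d1 * n2) / q (n2 * k1 - n1 * k2).

(* (alpha_c, n1, d1, k1, n2, d2, k2) is a critical data set for type (n,d,k);
   alpha_c is determined by the other entries (alpha_c above). *)
Definition critical_data (n d k n1 d1 k1 n2 d2 k2 : int) : Prop :=
  [/\ 1 <= n1, 1 <= n2, 0 <= k1, 0 <= k2 &
  [/\ n1 + n2 = n, d1 + d2 = d, k1 + k2 = k,
      q d2 / q n2 > q d1 / q n1 &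
      q k1 / q n1 > q k2 / q n2 ]].

Definition bound_ok (n d k : int) : Prop :=
  q d >= q (n ^+ 2 - 1) / q k - q (n - k).

Definition allowable (n d k n1 d1 k1 n2 d2 k2 : int) : Prop :=
  critical_data n d k n1 d1 k1 n2 d2 k2 /\
  (exists a t l m : int,
     [/\ d = n * a - t, 0 <= t < n,
         k * a = l * (n - k) + t + m, 0 <= m < n - k &
         q t / q k < alpha_c n1 d1 k1 n2 d2 k2 < q (l * n + t) / q k]) /\
  bound_ok n d k /\ bound_ok n1 d1 k1 /\
  ((k2 = 0 /\ n2 = 1) \/ (1 <= k2 /\ bound_ok n2 d2 k2)).

Definition C12 (n1 d1 k1 n2 d2 k2 : int) : int :=
  - n1 * n2 - d2 * n1 + d1 * n2 + k1 * (d2 + n2 - k2).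

Definition C21 (n1 d1 k1 n2 d2 k2 : int) : int :=
  - n1 * n2 + d2 * n1 - d1 * n2 + k2 * (d1 + n1 - k1).

(* Main.v *)
Require Import Defs.
From mathcomp Require Import all_boot all_order all_algebra.
From mathcomp Require Import zify ring lra.
Import Order.TTheory GRing.Theory Num.Theory.
Local Open Scope ring_scope.

Lemma S1' (S : int) : 2 <= S -> 1 <= S. Proof. lia. Qed.
Lemma k1k (k : int) : 0 < k -> 1 <= k. Proof. lia. Qed.

Lemma powmono (S : int) : 1 <= S -> S <= S^+2 /\ S^+2 <= S^+3 /\ S^+3 <= S^+4.
Proof.
move=> hS; have h0 : forall n, 0 <= S^+n by move=> n; apply: exprn_ge0; lia.
split; first by rewrite expr2 ler_peMl //; lia.
split; first by rewrite (exprS S 2) ler_peMl.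
by rewrite (exprS S 3) ler_peMl.
Qed.

Lemma core (k n1 d1 k1 n2 d2 k2 a t l mm : int) :
 0 < k -> 1 <= n1 -> 1 <= n2 -> 0 <= k1 -> 0 <= k2 -> k = k1 + k2 ->
 d1*n2 < d2*n1 -> k2*n1 < k1*n2 ->
 d1 + d2 = (n1+n2)*a - t -> 0 <= t -> t < n1+n2 ->
 k*a = l*(n1+n2-k) + t + mm -> 0 <= mm -> mm < n1+n2-k ->
 t*(n2*k1-n1*k2) < k*(d2*n1-d1*n2) ->
 k*(d2*n1-d1*n2) < (l*(n1+n2)+t)*(n2*k1-n1*k2) ->
 n1^+2 - 1 - k1*(n1-k1) <= k1*d1 ->
 (k2 = 0 /\ n2 = 1) \/ (1 <= k2 /\ n2^+2-1-k2*(n2-k2) <= k2*d2) ->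
 (- n1 * n2 - d2 * n1 + d1 * n2 + k1 * (d2 + n2 - k2) <= 0 \/
  - n1 * n2 + d2 * n1 - d1 * n2 + k2 * (d1 + n1 - k1) <= 0) ->
 n1 + n2 <= 6*k^+3 /\ -(2*(n1+n2)) <= d1 /\ d1 <= 3*(n1+n2+k)^+4
   /\ -(2*(n1+n2)) <= d2 /\ d2 <= 3*(n1+n2+k)^+4.
Proof.
move=> hk hn1 hn2 hk1 hk2 ek hd hkk ed ht0 ht1 ea hm0 hm1 hal1 hal2 hB1 hB2 hC.
have k1p : 1 <= k1 by clear -hkk hk2 hn1 hn2 hk1; nia.
have [D eD] : exists D : int, D = n2*k1 - n1*k2 by eexists.
have [N eN] : exists N : int, N = d2*n1 - d1*n2 by eexists.
have [X eX] : exists X : int, X = k*d2 - k*a*n2 + k2*t by eexists.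
have [P eP] : exists P : int, P = l*(n1+n2) + t by eexists.
have [w ew] : exists w : int, w = l*D - X by eexists.
rewrite -eD -eN in hal1 hal2; rewrite -eP in hal2.
have Dp : 1 <= D by lia.
have iX : k*N - t*D = (n1+n2)*X.
  rewrite eN eD eX ek.
  have -> : d1 = (n1+n2)*a - t - d2 by lia.
  ring.
have X1 : 1 <= X by clear -iX hal1 hn1 hn2 hk; nia.
have X2 : X <= l*D - 1.
  have h : (n1+n2)*X < (n1+n2)*(l*D) by rewrite eP in hal2; clear -hal2 iX; lia.
  clear -h hn1 hn2; nia.
have w1 : 1 <= w by lia.
have l1 : 1 <= l by clear -X1 X2 Dp; nia.
have P0 : 0 <= P by rewrite eP; clear -l1 ht0 hn1 hn2; nia.
have d1lo : -(n1+1) <= d1.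
  have h : 0 < k1*(d1+n1).
    have h1 : 1 <= n1*n1 by clear -hn1; nia.
    have h2 : 1 <= k1*k1 by clear -k1p; nia.
    move: hB1; rewrite expr2 => hB1.
    clear -hB1 h1 h2; lia.
  clear -h k1p; nia.
have d2lo : -(2*n2) <= d2 by clear -d1lo hd hn1 hn2; nia.

have nk : 1 <= n1 + n2 - k by lia.
have em : mm = k*a - l*(n1+n2-k) - t by lia.
have ed1 : d1 = (n1+n2)*a - t - d2 by lia.
have id1 : k*d1 = (n1-k1)*P + n1*mm + w.
  rewrite ew eX eP eD em ed1 ek; ring.
have id2 : k*d2 = (n2-k2)*P + n2*mm - w.
  rewrite ew eX eP eD em ek; ring.
have iN : k*N = t*D + (n1+n2)*X by lia.
have kp := hk.
have N1 : 1 <= N by lia.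
have fromP : P <= k*(n1+n2)^+2 + (n1+n2)^+2 + k^+3 ->
   n1 + n2 <= 6*k^+3 ->
   n1 + n2 <= 6*k^+3 /\ -(2*(n1+n2)) <= d1 /\ d1 <= 3*(n1+n2+k)^+4
   /\ -(2*(n1+n2)) <= d2 /\ d2 <= 3*(n1+n2+k)^+4.
  move=> hP hn.
  have hdk : k*(d1+d2) = (n1+n2-k)*P + (n1+n2)*mm by lia.
  have [S eS] : exists S : int, S = n1+n2+k by eexists.
  have S1 : 2 <= S by lia.
  have hP' : P <= S^+3.
    have -> : S^+3 = S*S*S by rewrite !exprS expr0 mulr1 mulrA.
    move: hP; rewrite !exprS !expr0 !mulr1 eS => hP.
    clear -hP hn1 hn2 hk; nia.
  have hd0 : 0 <= d1 + d2 by clear -hdk P0 nk hm0 hn1 hn2 hk; nia.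
  have hdd : d1 + d2 <= S^+4 + S^+2.
    have h1 : d1 + d2 <= k*(d1+d2) by clear -hd0 hk; nia.
    have h2 : (n1+n2-k)*P <= S * S^+3 by clear -hP' P0 nk eS hk; nia.
    have h3 : (n1+n2)*mm <= S^+2 by rewrite expr2; clear -eS hm0 hm1 hn1 hn2 hk; nia.
    have -> : S^+4 = S * S^+3 by rewrite exprS.
    lia.
  rewrite -eS.
  have [p1 [p2 p3]] := powmono _ (S1' _ S1).
  have h7 : 2*S <= S^+2 by rewrite expr2; clear -S1; nia.
  repeat split => //; lia.

have k3 : k1*k2 <= k^+2 by rewrite expr2 ek; clear -hk1 hk2; nia.
have k3' : k*(k1*k2) <= k^+3 by rewrite exprS; clear -k3 hk; nia.
have [k30 [k32 _]] := powmono _ (k1k _ hk).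
have k31 : k <= k^+3 by lia.
case: hC => hC.
-
  have iC : k*(- n1 * n2 - d2 * n1 + d1 * n2 + k1 * (d2 + n2 - k2))
     = (n1-k1)*(k2*P-k*n2) + k1*n2*mm + (n1+n2-k1)*w - k*k1*k2.
    rewrite ew eX eP eD em ed1 ek; ring.
  have hkC : (n1-k1)*(k2*P-k*n2) + k1*n2*mm + (n1+n2-k1)*w - k*k1*k2 <= 0.
    rewrite -iC; clear -hC hk; nia.
  case: hB2 => [[k20 n21]|[k21 hB2]].
  + exfalso. subst k2 n2.
    have hw : k <= w.
      have e1 : w = k*(l - d2 + a) by rewrite ew eX eD ek; ring.
      have : 1 <= l - d2 + a by move: w1; rewrite e1; clear -hk; nia.
      rewrite e1; clear -hk; nia.
    have ekk : k1 = k by lia.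
    move: hkC; rewrite ekk; clear -hw nk hm0 hk; nia.
  + case: (ltrgtP n1 k1) => hnk.
    *
      have iC' : k*(- n1 * n2 - d2 * n1 + d1 * n2 + k1 * (d2 + n2 - k2))
         = k*k2*d1 + D*mm + (n1+n2-k)*w + (k1-n1)*k*n2 - k*k1*k2.
        rewrite ew eX eD em ed1 ek; ring.
      have hd1 : 1 <= d1.
        have h : k1 <= k1*d1 by move: hB1; rewrite expr2; clear -hnk hn1 k1p; nia.
        clear -h k1p; nia.
      have h0 : k*k2*d1 + D*mm + (n1+n2-k)*w + (k1-n1)*k*n2 - k*k1*k2 <= 0.
        rewrite -iC'; clear -hC hk; nia.
      have t1 : 0 <= k*k2*d1 by clear -hk k21 hd1; nia.
      have t2 : 0 <= D*mm by clear -Dp hm0; nia.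
      have t3 : 0 <= (n1+n2-k)*w by clear -nk w1; nia.
      have t4 : 0 <= (k1-n1)*k*n2 by apply: mulr_ge0; [apply: mulr_ge0|]; lia.
      have u1 : (k1-n1)*k*n2 <= k*(k1*k2) by clear -h0 t1 t2 t3; lia.
      have u1' : k*n2 <= k*(k1*k2).
        have : 0 <= (k1-n1-1)*(k*n2) by apply: mulr_ge0; [lia|apply: mulr_ge0; lia].
        clear -u1; lia.
      have u2 : n2 <= k1*k2 by move: u1'; rewrite ler_pM2l.
      have u3 : (n1+n2-k)*w <= k*(k1*k2) by clear -h0 t1 t2 t4; lia.
      have u4 : w <= k*(k1*k2) by clear -u3 nk w1; nia.
      have hn : n1 + n2 <= 6*k^+3 by clear -u2 hnk ek hk2 k3 k31 k32; lia.
      apply: fromP => //.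
      have e2 : (k1-n1)*P = n1*mm + w - k*d1 by rewrite id1; ring.
      have v1 : P <= (k1-n1)*P by clear -P0 hnk; nia.
      have v2 : n1*mm <= (n1+n2)^+2 by rewrite expr2; clear -hm0 hm1 hn1 hn2 hk; nia.
      have v3 : 0 <= k*(n1+n2)^+2 by apply: mulr_ge0; [lia|apply: exprn_ge0; lia].
      have v4 : 0 <= k*d1 by clear -hk hd1; nia.
      clear -e2 v1 v2 v3 v4 u4 k3'; lia.
    *
      have n2k2 : k2 < n2 by clear -hnk hkk k1p hk2; nia.
      have hY : k*(k2*k2-1) - k2*n2*mm + k2*w <= (n2-k2)*(k2*P-k*n2).
        have h1 : k*(n2^+2-1-k2*(n2-k2)) <= k*(k2*d2) by apply: ler_wpM2l; lia.
        have h2 : k2*(k*d2) = k2*((n2-k2)*P + n2*mm - w) by rewrite id2.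
        move: h1; rewrite expr2 => h1.
        clear -h1 h2; lia.
      have h3 : (n1-k1)*(k*(k2*k2-1) - k2*n2*mm + k2*w) <= (n1-k1)*((n2-k2)*(k2*P-k*n2))
        by apply: ler_wpM2l; lia.
      have h4 : (n2-k2)*((n1-k1)*(k2*P-k*n2) + k1*n2*mm + (n1+n2-k1)*w - k*k1*k2) <= 0
        by clear -hkC n2k2; nia.
      have h5 : 0 <= (n1-k1)*(k*(k2*k2-1)) by apply: mulr_ge0; [lia|apply: mulr_ge0; [lia|clear -k21; nia]].
      have h6 : 0 <= n2*mm*(n2*k1 - n1*k2) by rewrite -eD; apply: mulr_ge0; [apply: mulr_ge0|]; lia.
      have h7 : 0 <= (n1-k1)*k2*w by apply: mulr_ge0; [apply: mulr_ge0|]; lia.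
      have h8 : (n2-k2)*((n1+n2-k1)*w) <= (n2-k2)*(k*(k1*k2)) by clear -h3 h4 h5 h6 h7; lia.
      have h9 : (n1+n2-k1)*w <= k*(k1*k2) by move: h8; rewrite ler_pM2l // subr_gt0.
      have h10 : n1+n2-k1 <= k*(k1*k2) by clear -h9 w1 hnk hn2; nia.
      have hn : n1 + n2 <= 6*k^+3 by clear -h10 k3' k31 ek hk2 hk; lia.
      apply: fromP => //.
      have g1 : (n1-k1)*(k2*P-k*n2) <= k*(k1*k2).
        have : 0 <= k1*n2*mm by apply: mulr_ge0; [apply: mulr_ge0|]; lia.
        have : 0 <= (n1+n2-k1)*w by clear -hnk hn2 w1; nia.
        clear -hkC; lia.
      have g2 : P <= (n1-k1)*k2*P by apply: ler_peMl; [lia| clear -hnk k21; nia].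
      have g3 : (n1-k1)*(k*n2) <= k*(n1+n2)^+2.
        have : (n1-k1)*(k*n2) <= (n1+n2)*(k*(n1+n2)) by apply: ler_pM; try apply: mulr_ge0; try lia; apply: ler_wpM2l; lia.
        rewrite expr2; lia.
      have g4 : 0 <= (n1+n2)^+2 by apply: exprn_ge0; lia.
      clear -g1 g2 g3 g4 k3'; lia.
    *
      exfalso. subst n1.
      have hd1 : 1 <= d1.
        have : 1 <= k*d1 by rewrite id1; clear -hm0 w1 k1p; nia.
        clear -hk; nia.
      have hd1' : k1 <= d1.
        move: hB1; rewrite expr2 => hB1.
        case: (lerP k1 d1) => // h.
        exfalso; clear -hB1 h hd1 k1p; nia.
      have n2k2 : k2 < n2 by clear -Dp eD k1p; nia.
      move: hC; clear -hd1' n2k2 k1p hn2; nia.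

-
  have iC21 : - n1 * n2 + d2 * n1 - d1 * n2 + k2 * (d1 + n1 - k1) = N + k2*(d1+n1-k1) - n1*n2
    by rewrite eN; ring.
  rewrite iC21 in hC.
  case: hB2 => [[k20 n21]|[k21 hB2]].
  + exfalso. subst k2 n2.
    have hX : 1 <= k*(d2 - a) by move: X1; rewrite eX; lia.
    have hx : 1 <= d2 - a by clear -hX hk; nia.
    move: hC; rewrite eN ed1; clear -hx ht0 hn1; nia.
  + have e0 : 0 <= d1 + n1 - k1.
      have h : 0 <= k1*(d1+n1-k1) by move: hB1; rewrite expr2; clear -hn1; nia.
      clear -h k1p; nia.
    have hN : (n2-k2)*N <= k1*k2*n2.
      have iC : n2*(N + k2*(d1+n1-k1) - n1*n2) = (n2-k2)*N + n1*(k2*k2-1) - k1*k2*n2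
           + n1*(k2*d2 - (n2^+2 - 1 - k2*(n2-k2))) by rewrite eN !expr2; ring.
      have h1 : n2*(N + k2*(d1+n1-k1) - n1*n2) <= 0 by clear -hC hn2; nia.
      have h2 : 0 <= n1*(k2*k2-1) by apply: mulr_ge0; [lia|clear -k21; nia].
      have h3 : 0 <= n1*(k2*d2 - (n2^+2 - 1 - k2*(n2-k2))) by apply: mulr_ge0; [lia|rewrite subr_ge0].
      lia.
    have hkN : n1 + n2 <= k*N by clear -iN X1 ht0 Dp hn1 hn2; nia.
    have hn : n1 + n2 <= 6*k^+3.
      case: (lerP n2 (2*k2)) => h2.
      * have h : k2*n1 < k2*(2*k1) by clear -h2 hkk hk1; nia.
        have : n1 < 2*k1 by clear -h k21; nia.
        lia.
      * have ha : (n2-k2)*(n1+n2) <= (n2-k2)*(k*N) by apply: ler_wpM2l; lia.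
        have hc : k*((n2-k2)*N) <= k*(k1*k2*n2) by apply: ler_wpM2l; lia.
        have h : (n2-k2)*(n1+n2) <= k*(k1*k2)*n2 by clear -ha hc; lia.
        have h0 : 0 < (n2 - 2*k2)*(n1+n2) by apply: mulr_gt0; lia.
        have h' : n2*(n1+n2) < n2*(2*(k*(k1*k2))) by clear -h h0; lia.
        have : n1+n2 < 2*(k*(k1*k2)) by move: h'; rewrite ltr_pM2l //; lia.
        lia.
    have hd1 : d1 <= n1*n2 + k1.
      have hh : 0 <= (k2-1)*(d1+n1-k1) by apply: mulr_ge0; lia.
      clear -hC N1 hn1 hh; lia.
    have hd2 : d2*n1 <= n1*n2 + n2*(n1*n2+k1).
      have hh : 0 <= k2*(d1+n1-k1) by apply: mulr_ge0; lia.
      have : N <= n1*n2 by clear -hC hh; lia.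
      move: eN; clear -hd1 hn2; nia.
    have hd2' : d2 <= n1*n2 + n2*(n1*n2+k1).
      have B0 : 0 <= n1*n2 + n2*(n1*n2+k1).
        apply: addr_ge0; apply: mulr_ge0; try apply: addr_ge0; try apply: mulr_ge0; lia.
      case: (lerP 0 d2) => h0; last lia.
      have : d2 <= d2*n1 by clear -h0 hn1; nia.
      lia.
    have [S eS] : exists S : int, S = n1+n2+k by eexists.
    rewrite -eS.
    have S1 : 2 <= S by lia.
    have b1 : n1*n2 + k1 <= S^+2 by rewrite expr2 eS; clear -hn1 hn2 hk1 hk2 ek; nia.
    have b2 : n1*n2 + n2*(n1*n2+k1) <= S^+3.
      have h : n2*(n1*n2+k1) <= (S-1) * S^+2 by clear -b1 eS hn1 hn2 hk; nia.
      have h' : n1*n2 <= S^+2 by clear -b1 hk1; lia.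
      rewrite exprS. clear -h h' S1; lia.
    have [p1 [p2 p3]] := powmono _ (S1' _ S1).
    repeat split => //; lia.
Qed.

Lemma qlt_div (a b c e : int) : 0 < b -> 0 < e ->
  (q a / q b < q c / q e) = (a * e < c * b).
Proof.
move=> hb he.
rewrite ltr_pdivrMr ?ltr0z // mulrAC ltr_pdivlMr ?ltr0z // /q -!intrM ltr_int.
done.
Qed.

Lemma bound_okE (n d k : int) : 0 < k ->
  bound_ok n d k -> n^+2 - 1 - k*(n-k) <= k*d.
Proof.
move=> hk; rewrite /bound_ok lerBlDr ler_pdivrMr ?ltr0z // /q -intrD -intrM ler_int.
move=> h; lia.
Qed.

Lemma pow4_le (x y : int) : 0 <= x -> x <= y -> x^+4 <= y^+4.
Proof.
move=> hx hxy.
have h2 : x*x <= y*y by apply: ler_pM; lia.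
have h0 : 0 <= x*x by apply: mulr_ge0.
have -> : x^+4 = (x*x)*(x*x) by rewrite !exprS expr0; ring.
have -> : y^+4 = (y*y)*(y*y) by rewrite !exprS expr0; ring.
by apply: ler_pM.
Qed.

Lemma in_range (Mn : nat) (x : int) : -(Mn%:Z) <= x -> x <= Mn%:Z ->
  x \in [seq (i%:Z - Mn%:Z) | i <- iota 0 (2*Mn).+1].
Proof.
move=> h1 h2; apply/mapP; exists (absz (x + Mn%:Z)).
  rewrite mem_iota add0n.
  have h3 : (0 <= x + Mn%:Z) by lia.
  have h4 : ((absz (x + Mn%:Z))%:Z = x + Mn%:Z) by rewrite gez0_abs.
  lia.
have h3 : (0 <= x + Mn%:Z) by lia.
rewrite gez0_abs //; ring.
Qed.

Lemma pair_mem (A B : eqType) (s : seq A) (t : seq B) (x : A) (y : B) :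
  x \in s -> y \in t -> (x, y) \in [seq (a, b) | a <- s, b <- t].
Proof. move=> hx hy; exact: (allpairs_f (fun a b => (a,b)) hx hy). Qed.

Theorem theorem5p8 (k : int) (hk : 0 < k) :
  exists s : seq (int * int * int * int * int * int * int * int),
    forall n d n1 d1 k1 n2 d2 k2 : int,
      k < n ->
      allowable n d k n1 d1 k1 n2 d2 k2 ->
      (C12 n1 d1 k1 n2 d2 k2 <= 0 \/ C21 n1 d1 k1 n2 d2 k2 <= 0) ->
      (n, d, n1, d1, k1, n2, d2, k2) \in s.
Proof.
pose Mn : nat := absz (2*(3*(7*k^+3)^+4)).
pose R := [seq (i%:Z - Mn%:Z) | i <- iota 0 (2*Mn).+1].
pose pr (A : eqType) (s : seq A) := [seq (x, y) | x <- s, y <- R].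
exists (pr _ (pr _ (pr _ (pr _ (pr _ (pr _ (pr _ R))))))).
move=> n d n1 d1 k1 n2 d2 k2 hkn [hcd [[a [t [l [mm [ed ht ea hm hal]]]]] [_ [hB1 hB2]]]] hC.
case: hcd => hn1 hn2 hk1 hk2 [en ed12 ek hdd hkk].
have hn1' : 0 < n1 by lia.
have hn2' : 0 < n2 by lia.
rewrite (qlt_div _ _ _ _ hn1' hn2') in hdd.
rewrite (qlt_div _ _ _ _ hn2' hn1') in hkk.
have k1p : 0 < k1 by clear -hkk hn1 hn2 hk2; nia.
have hD : 0 < n2*k1 - n1*k2 by clear -hkk; lia.
case/andP: ht => ht0 ht1. case/andP: hm => hm0 hm1.
case/andP: hal; rewrite /alpha_c (qlt_div _ _ _ _ hk hD) (qlt_div _ _ _ _ hD hk) => hal1 hal2.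
have hB1' := bound_okE _ _ _ k1p hB1.
have hB2' : (k2 = 0 /\ n2 = 1) \/ (1 <= k2 /\ n2^+2-1-k2*(n2-k2) <= k2*d2).
  case: hB2 => [h|[h1 h2]]; [by left | right; split => //; apply: bound_okE => //; lia].
rewrite /C12 /C21 in hC.
have ed' : d1 + d2 = (n1+n2)*a - t by rewrite ed12 ed en.
subst n d.
have hal1' : t*(n2*k1-n1*k2) < k*(d2*n1-d1*n2) by clear -hal1; lia.
have hal2' : k*(d2*n1-d1*n2) < (l*(n1+n2)+t)*(n2*k1-n1*k2) by clear -hal2; lia.
have [hn [d1lo [d1hi [d2lo d2hi]]]] :=
  core _ _ _ _ _ _ _ _ _ _ _ hk hn1 hn2 hk1 hk2 (esym ek) hdd hkk ed' ht0 ht1 ea hm0 hm1 hal1' hal2' hB1' hB2' hC.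
have [T eT] : exists T : int, T = 7*k^+3 by eexists.
have [kk1 [kk2 kk3]] := powmono _ (k1k _ hk).
have hT : n1 + n2 + k <= T by clear -eT hn kk1 kk2 kk3 hk; lia.
have hT4 : (n1+n2+k)^+4 <= T^+4 by apply: pow4_le; clear -hn1 hn2 hk hT; lia.
have [t1 [t2 t3]] := powmono T (ltac:(clear -eT hk kk1 kk2 kk3; lia)).
have T0 : 0 <= T by clear -eT kk1 kk2 kk3 hk; lia.
have eMn : Mn%:Z = 2*(3*T^+4).
  rewrite /Mn eT gez0_abs //; rewrite -eT; clear -T0 t1 t2 t3; lia.
rewrite /pr.
have [V eV] : exists V : int, V = T^+4 by eexists.
have [U eU] : exists U : int, U = (n1+n2+k)^+4 by eexists.
have [T2 eT2] : exists T2 : int, T2 = T^+2 by eexists.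
have [T3 eT3] : exists T3 : int, T3 = T^+3 by eexists.
have [K3 eK3] : exists K3 : int, K3 = k^+3 by eexists.
rewrite -eV -eU in hT4. rewrite -eU in d1hi d2hi. rewrite -eV in eMn t3.
rewrite -eT2 in t1 t2. rewrite -eT3 in t2 t3. rewrite -eK3 in hn eT.
clear -ed' hn d1lo d1hi d2lo d2hi hT hT4 t1 t2 t3 eMn hn1 hn2 hk1 hk2 ek hk T0 eT.
do 7 (apply: pair_mem; [|apply: in_range; rewrite eMn; lia]).
apply: in_range; rewrite eMn; lia.
Qed.
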